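(* Let $\kappa=4$. For each of the rooted trees $((a,b),c)$, $((a,c),b)$, $((b,c),a)$, consider the polynomials of the corresponding form: for $((a,b),c)$ (indices ordered $a,b,c$) these are the entries of $$P_{+\cdot\cdot}\operatorname{Cof}(P_{\cdot+\cdot})^TP_{\cdot\cdot k}-P_{\cdot\cdot k}^T\operatorname{Cof}(P_{\cdot+\cdot})P_{+\cdot\cdot}^T,\qquad P_{\cdot\cdot k}\operatorname{Cof}(P_{+\cdot\cdot})P_{\cdot+\cdot}^T-P_{\cdot+\cdot}\operatorname{Cof}(P_{+\cdot\cdot})^TP_{\cdot\cdot k}^T,\quad k\in[4],$$ and for the other two trees the analogous polynomials obtained by permuting the roles of the taxa so that the cherry taxa play the roles of $a,b$ and the remaining taxon the role of $c$. Then all of these polynomials, for all three trees, vanish on every probability tensor $P$ arising from the CK Jukes–Cantor model on any of the three rooted trees with any edge lengths.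
   Context: For a 3-way tensor $P=(p_{ijk})$ with indices ordered $a,b,c$: $P_{+\cdot\cdot}$ has $(j,k)$-entry $\sum_ip_{ijk}$; $P_{\cdot+\cdot}$ has $(i,k)$-entry $\sum_jp_{ijk}$; $P_{\cdot\cdot k}$ has $(i,j)$-entry $p_{ijk}$; $^T$ is transpose; $\operatorname{Cof}(A)$ is the matrix of cofactors of $A$. CK Jukes–Cantor model on a rooted species tree with edge lengths (not necessarily ultrametric): with constant population size, a gene tree with one lineage per taxon is drawn under the multispecies coalescent, and a site evolves on it under the 4-state Jukes–Cantor process (equal off-diagonal rates, uniform stationary distribution) from the uniform root distribution, with a fixed scalar mutation rate; the site pattern distribution is the mixture over gene trees. *)

(* Defs.v *)
From HB Require Import structures.
From mathcomp Require Import all_boot all_order all_algebra.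
From mathcomp Require Import all_classical all_reals all_analysis.
Set Implicit Arguments. Unset Strict Implicit. Unset Printing Implicit Defensive.
Import Order.TTheory GRing.Theory Num.Theory.
Local Open Scope ring_scope.
Local Open Scope classical_set_scope.

(* A 3-way tensor with indices ordered (a,b,c), each in [4] = 'I_4. *)
Definition tensor3 (R : Type) := 'I_4 -> 'I_4 -> 'I_4 -> R.

Section Flattenings.
Variable R : comRingType.
Implicit Type P : tensor3 R.

Definition Pplus_a P : 'M[R]_4 := \matrix_(j, k) \sum_i P i j k.
Definition Pplus_b P : 'M[R]_4 := \matrix_(i, k) \sum_j P i j k.
Definition Pslice P (k : 'I_4) : 'M[R]_4 := \matrix_(i, j) P i j k.

Definition Cof n (A : 'M[R]_n) : 'M[R]_n := \matrix_(i, j) cofactor A i j.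

Definition inv1 P k : 'M[R]_4 :=
  Pplus_a P *m (Cof (Pplus_b P))^T *m Pslice P k
  - (Pslice P k)^T *m Cof (Pplus_b P) *m (Pplus_a P)^T.
Definition inv2 P k : 'M[R]_4 :=
  Pslice P k *m Cof (Pplus_a P) *m (Pplus_b P)^T
  - Pplus_b P *m (Cof (Pplus_a P))^T *m (Pslice P k)^T.

(* tree ((a,b),c): identity; ((a,c),b): roles (a,c,b); ((b,c),a): roles (b,c,a) *)
Definition reorder (s : 'I_3) P : tensor3 R :=
  match val s with
  | 0 => P
  | 1 => fun x y z => P x z y
  | _ => fun x y z => P z x y
  end.

Definition tree_invariants_vanish (s : 'I_3) P : Prop :=
  forall k : 'I_4, inv1 (reorder s P) k = 0 /\ inv2 (reorder s P) k = 0.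
End Flattenings.

Section CKJC.
Variable R : realType.

(* Jukes-Cantor transition matrix after time t with mutation rate mu
   (total substitution rate mu, each off-diagonal rate mu/3). *)
Definition JC (mu t : R) (x y : 'I_4) : R :=
  if x == y then 1/4 + 3/4 * expR (- (4/3) * mu * t)
  else 1/4 - 1/4 * expR (- (4/3) * mu * t).

(* site pattern probability (state i at x, j at y, k at z) for a rooted gene tree
   ((x,y),z): pendant branches dx, dy to the cherry node, internal branch e from
   the cherry node to the root, branch dz from root to z; uniform root. *)
Definition gene3 (mu dx dy e dz : R) (i j k : 'I_4) : R :=
  \sum_(r < 4) \sum_(q < 4)
     (1/4) * JC mu e r q * JC mu dx q i * JC mu dy q j * JC mu dz r k.

Local Notation leb := (@lebesgue_measure R).

(* CK Jukes-Cantor distribution for species tree ((x,y),z):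
   internal edge length T, pendant edge lengths tx, ty, tz (coalescent units,
   population size constant, one lineage per taxon), mutation rate mu. *)
Definition ck_cherry (mu T tx ty tz : R) (i j k : 'I_4) : R :=
  (* x,y coalesce in the internal population at time s above the cherry node *)
  Rintegral leb [set s | 0 <= s <= T] (fun s => expR (- s) *
    Rintegral leb [set u | 0 <= u] (fun u => expR (- u) *
      gene3 mu (tx + s) (ty + s) (T + u - s) (tz + u) i j k))
  (* no coalescence in the internal population: three lineages at the root *)
  + expR (- T) *
    Rintegral leb [set u | 0 <= u] (fun u => expR (- (3 * u)) *
      Rintegral leb [set w | 0 <= w] (fun w => expR (- w) *
        (gene3 mu (tx + T + u) (ty + T + u) w (tz + u + w) i j k
       + gene3 mu (tx + T + u) (tz + u) w (ty + T + u + w) i k j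
       + gene3 mu (ty + T + u) (tz + u) w (tx + T + u + w) j k i))).

(* site pattern distribution (indices ordered a,b,c) of the CK JC model on
   the species tree s: 0 = ((a,b),c), 1 = ((a,c),b), 2 = ((b,c),a),
   with internal edge length T and pendant edge lengths ta, tb, tc. *)
Definition ck_JC (s : 'I_3) (mu T ta tb tc : R) : tensor3 R :=
  match val s with
  | 0 => fun i j k => ck_cherry mu T ta tb tc i j k
  | 1 => fun i j k => ck_cherry mu T ta tc tb i k j
  | _ => fun i j k => ck_cherry mu T tb tc ta j k i
  end.
End CKJC.

(* Main.v *)
Require Import Defs.
From HB Require Import structures.
From mathcomp Require Import all_boot all_order all_algebra.
From mathcomp Require Import all_classical all_reals all_analysis.
From mathcomp Require Import ring.
Import Order.TTheory GRing.Theory Num.Theory.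
Local Open Scope ring_scope.

Ltac ord4 i := case: i => [[|[|[|[|?]]]] ?] //.

Definition o0 : 'I_4 := @Ordinal 4 0 erefl.
Definition o1 : 'I_4 := @Ordinal 4 1 erefl.
Definition o2 : 'I_4 := @Ordinal 4 2 erefl.

Definition canon (b1 b2 b3 : bool) : 'I_4 * 'I_4 * 'I_4 :=
  match b1, b2, b3 with
  | true, true, _ => (o0, o0, o0)
  | true, false, _ => (o0, o0, o1)
  | false, true, _ => (o1, o0, o0)
  | false, false, true => (o0, o1, o0)
  | false, false, false => (o0, o1, o2)
  end.

Section G.
Variable R : comRingType.
Definition gg (A B : R) (x y : 'I_4) := if x == y then A else B.
Definition SS A1 B1 A2 B2 A3 B3 A4 B4 (i j k : 'I_4) : R :=
  \sum_(r < 4) \sum_(q < 4) gg A1 B1 r q * gg A2 B2 q i * gg A3 B3 q j * gg A4 B4 r k.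

Lemma SS_canon A1 B1 A2 B2 A3 B3 A4 B4 i j k :
  SS A1 B1 A2 B2 A3 B3 A4 B4 i j k =
  let c := canon (i == j) (j == k) (i == k) in SS A1 B1 A2 B2 A3 B3 A4 B4 c.1.1 c.1.2 c.2.
Proof.
rewrite /= /SS !big_ord_recl !big_ord0.
(ord4 i; ord4 j; ord4 k; rewrite /gg /=; ring).
Qed.
End G.

Section G2.
Variable R : realType.
Lemma gene3_SS (mu dx dy e dz : R) i j k :
  gene3 mu dx dy e dz i j k =
  @SS R (1/4 * JC mu e o0 o0) (1/4 * JC mu e o0 o1) (JC mu dx o0 o0) (JC mu dx o0 o1)
     (JC mu dy o0 o0) (JC mu dy o0 o1) (JC mu dz o0 o0) (JC mu dz o0 o1) i j k.
Proof.
apply: eq_bigr => r _; apply: eq_bigr => q _.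
rewrite /gg /JC /=.
by case: (r == q); case: (q == i); case: (q == j); case: (r == k).
Qed.

Lemma gene3_canon (mu dx dy e dz : R) i j k :
  gene3 mu dx dy e dz i j k =
  let c := canon (i == j) (j == k) (i == k) in gene3 mu dx dy e dz c.1.1 c.1.2 c.2.
Proof. by rewrite /= !gene3_SS SS_canon. Qed.
End G2.

Section Alg.
Variable R : comRingType.

Lemma row'_col'_mxf n (f : nat -> nat -> R) (i j : 'I_n.+1) :
  row' i (col' j (\matrix_(a < n.+1, b < n.+1) f a b)) =
  \matrix_(a < n, b < n) f (bump i a) (bump j b).
Proof. by apply/matrixP => a b; rewrite !mxE. Qed.

Lemma detf2 (f : nat -> nat -> R) :
  \det (\matrix_(i < 2, j < 2) f i j) = f 0 0 * f 1 1 - f 0 1 * f 1 0.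
Proof.
rewrite (expand_det_row _ 0) !big_ord_recl big_ord0 /cofactor !row'_col'_mxf.
rewrite !det_mx11 !mxE /= /bump /=. ring.
Qed.

Lemma detf3 (f : nat -> nat -> R) :
  \det (\matrix_(i < 3, j < 3) f i j) =
  f 0 0 * (f 1 1 * f 2 2 - f 1 2 * f 2 1)
  - f 0 1 * (f 1 0 * f 2 2 - f 1 2 * f 2 0)
  + f 0 2 * (f 1 0 * f 2 1 - f 1 1 * f 2 0).
Proof.
rewrite (expand_det_row _ 0) !big_ord_recl big_ord0 /cofactor !row'_col'_mxf.
rewrite !(detf2 (fun a b => f (bump _ a) (bump _ b))) !mxE /= /bump /=. ring.
Qed.

Definition Dm (d o : R) : 'M[R]_4 := \matrix_(i, j) if (i : nat) == j then d else o.


Lemma CofD d o : Cof (Dm d o) =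
  Dm ((d - o) ^+ 2 * (d + 2 * o)) (- (d - o) ^+ 2 * o).
Proof.
apply/matrixP => i j; rewrite mxE /cofactor /Dm (@row'_col'_mxf 3 (fun a b => if a == b then d else o)) (detf3 (fun a b => if bump i a == bump j b then d else o)) !mxE.
ord4 i; ord4 j; rewrite /= /bump /=; ring.
Qed.

Lemma trD d o : (Dm d o)^T = Dm d o.
Proof. by apply/matrixP => i j; rewrite !mxE eq_sym. Qed.

Lemma mulD a b c e : Dm a b *m Dm c e = Dm (a * c + 3 * b * e) (a * e + b * c + 2 * b * e).
Proof.
apply/matrixP => i j; rewrite !mxE !big_ord_recl big_ord0 !mxE.
ord4 i; ord4 j; rewrite /= /bump /=; ring.
Qed.

Variable F : bool -> bool -> bool -> R.
Definition Pf : tensor3 R := fun i j k => F ((i:nat) == j) ((j:nat) == k) ((i:nat) == k).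

Let al := F true true true.
Let be := F true false false.
Let ga := F false false true.
Let de := F false true false.
Let ep := F false false false.

Lemma PaD : Pplus_a Pf = Dm (al + 3 * de) (be + ga + 2 * ep).
Proof.
apply/matrixP => i j; rewrite !mxE !big_ord_recl big_ord0 /Pf.
ord4 i; ord4 j; rewrite /= /bump /= /al /be /ga /de /ep; ring.
Qed.

Lemma PbD : Pplus_b Pf = Dm (al + 3 * ga) (be + de + 2 * ep).
Proof.
apply/matrixP => i j; rewrite !mxE !big_ord_recl big_ord0 /Pf.
ord4 i; ord4 j; rewrite /= /bump /= /al /be /ga /de /ep; ring.
Qed.

Lemma inv1_Pf k : inv1 Pf k = 0.
Proof.
rewrite /inv1 PaD PbD CofD !trD -[_ *m _ *m Dm _ _]mulmxA !mulD.
apply/matrixP => i j; rewrite !mxE !big_ord_recl !big_ord0 !mxE /Pf.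
ord4 k; ord4 i; ord4 j; rewrite /= /bump /= /al /be /ga /de /ep; ring.
Qed.

Lemma inv2_Pf k : inv2 Pf k = 0.
Proof.
rewrite /inv2 PaD PbD CofD !trD -[Pslice Pf k *m _ *m _]mulmxA !mulD.
apply/matrixP => i j; rewrite !mxE !big_ord_recl !big_ord0 !mxE /Pf.
ord4 k; ord4 i; ord4 j; rewrite /= /bump /= /al /be /ga /de /ep; ring.
Qed.
End Alg.
Arguments Pf {R} F.

Section Sym.
Variable R : comRingType.
Definition Sym (P : tensor3 R) := forall i j k i' j' k' : 'I_4,
  (i == j) = (i' == j') -> (j == k) = (j' == k') -> (i == k) = (i' == k') ->
  P i j k = P i' j' k'.

Lemma canon_ok (i j k : 'I_4) : let c := canon (i==j) (j==k) (i==k) in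
  [&& (i==j) == (c.1.1==c.1.2), (j==k) == (c.1.2 == c.2) & (i==k) == (c.1.1 == c.2)].
Proof. ord4 i; ord4 j; ord4 k. Qed.

Lemma Sym_Pf P : Sym P ->
  P = Pf (fun b1 b2 b3 => let c := canon b1 b2 b3 in P c.1.1 c.1.2 c.2).
Proof.
move=> hS; apply/funext => i; apply/funext => j; apply/funext => k.
rewrite /Pf /=.
have /and3P[/eqP e1 /eqP e2 /eqP e3] := canon_ok i j k.
exact: hS.
Qed.

Lemma reorder_sym s P : Sym P -> Sym (reorder s P).
Proof.
move=> hS; case: s => [[|[|[|?]]] ?] //; rewrite /reorder /=.
all: move=> i j k i' j' k' h1 h2 h3; apply: hS;
  rewrite ?(eq_sym k i) ?(eq_sym k j) ?(eq_sym j i)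
          ?(eq_sym k' i') ?(eq_sym k' j') ?(eq_sym j' i') //.
Qed.
End Sym.
Arguments Sym {R} P.
Arguments Sym_Pf {R} P.
Arguments reorder_sym {R} s P.

Section CK.
Variable R : realType.

Lemma gene3E : @gene3 R = fun mu dx dy e dz i j k =>
  let c := canon (i == j) (j == k) (i == k) in gene3 mu dx dy e dz c.1.1 c.1.2 c.2.
Proof.
apply/funext => mu; apply/funext => dx; apply/funext => dy; apply/funext => e.
apply/funext => dz; apply/funext => i; apply/funext => j; apply/funext => k.
exact: gene3_canon.
Qed.

Lemma ck_cherry_sym (mu T tx ty tz : R) : Sym (ck_cherry mu T tx ty tz).
Proof.
move=> i j k i' j' k' h1 h2 h3.
rewrite /ck_cherry gene3E; cbv beta.
rewrite (eq_sym k i) (eq_sym k j) (eq_sym j i) (eq_sym k' i') (eq_sym k' j') (eq_sym j' i').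
rewrite h1 h2 h3; reflexivity.
Qed.

Lemma ck_JC_sym s (mu T ta tb tc : R) : Sym (ck_JC s mu T ta tb tc).
Proof.
have hS := ck_cherry_sym.
move=> i j k i' j' k' h1 h2 h3; rewrite /ck_JC.
case: (val s) => [|[|n]]; cbv beta iota; apply: hS;
  rewrite ?(eq_sym k i) ?(eq_sym k j) ?(eq_sym j i)
          ?(eq_sym k' i') ?(eq_sym k' j') ?(eq_sym j' i'); assumption.
Qed.
End CK.
Arguments ck_JC_sym {R}.

Theorem corollaryA2 (R : realType) (mu T ta tb tc : R)
  (hmu : 0 < mu) (hT : 0 < T) (hta : 0 < ta) (htb : 0 < tb) (htc : 0 < tc)
  (s s' : 'I_3) :
  tree_invariants_vanish s' (ck_JC s mu T ta tb tc).
Proof.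
move=> k.
rewrite (Sym_Pf _ (reorder_sym s' _ (ck_JC_sym s mu T ta tb tc))).
split; [exact: inv1_Pf | exact: inv2_Pf].
Qed.
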